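(* Let $n\ge 2$. Every element $\pi\in D_n$ has a unique presentation of the form $$\pi = w_{1}^{j_{1}} \cdot t_{2}^{i_{2}} \cdot w_{2}^{j_{2}} \cdot t_{3}^{i_{3}} \cdots w_{n-1}^{j_{n-1}} \cdot t_{n}^{i_{n}},$$ where $0\le i_k\le k-1$ for $2\le k\le n$ and $0\le j_k\le 1$ for $1\le k\le n-1$.
   Context: $D_n$ ($n\ge 2$) is the Coxeter group with generators $s_{1'},s_1,\dots,s_{n-1}$ and relations $s^2=1$ for each generator, $(s_i s_{i+1})^3=1$, $(s_is_j)^2=1$ for $|i-j|\ge 2$ ($1\le i,j\le n-1$), $(s_{1'}s_2)^3=1$, and $(s_{1'}s_i)^2=1$ for $1\le i\le n-1$, $i\ne 2$. For $2\le k\le n$ put $t_k=s_1\cdot s_2\cdots s_{k-1}$, and for $1\le k\le n-1$ put $w_k=s_k\cdot s_{k-1}\cdots s_2\cdot s_1\cdot s_{1'}\cdot s_2\cdots s_k$ (so $w_1=s_1s_{1'}$). *)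

(* Defs.v *)
From mathcomp Require Import all_boot.
Set Implicit Arguments. Unset Strict Implicit. Unset Printing Implicit Defensive.

(* The Coxeter group D_n given by its presentation.
   Letters: 0 encodes s_{1'}, and k (1 <= k <= n-1) encodes s_k.
   A word is a seq nat all of whose letters are < n. *)

Definition coxm (a b : nat) : nat :=
  if a == b then 1
  else if (a == 0) then (if b == 2 then 3 else 2)
  else if (b == 0) then (if a == 2 then 3 else 2)
  else if (a == b.+1) || (b == a.+1) then 3 else 2.

Definition wpow (u : seq nat) (e : nat) : seq nat := flatten (nseq e u).

(* The congruence on words generated by the defining relations of D_n.
   Since all generators are involutions, words modulo this congruence
   are exactly the elements of the group D_n. *)
Inductive Deq (n : nat) : seq nat -> seq nat -> Prop :=
| Deq_refl u : Deq n u u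
| Deq_sym u v : Deq n u v -> Deq n v u
| Deq_trans u v w : Deq n u v -> Deq n v w -> Deq n u w
| Deq_rel a b u v : a < n -> b < n ->
    Deq n (u ++ wpow [:: a; b] (coxm a b) ++ v) (u ++ v).

Definition tword (k : nat) : seq nat := iota 1 k.-1.
Definition wword (k : nat) : seq nat := rev (iota 1 k) ++ 0 :: iota 2 k.-1.

Definition normal_form (n : nat) (i j : nat -> nat) : seq nat :=
  flatten [seq wpow (wword k) (j k) ++ wpow (tword k.+1) (i k.+1) | k <- iota 1 n.-1].

Definition nf_bounds (n : nat) (i j : nat -> nat) : Prop :=
  (forall k, 2 <= k <= n -> i k <= k - 1) /\
  (forall k, 1 <= k <= n - 1 -> j k <= 1).

(* Main.v *)
From Stdlib Require Import Setoid Morphisms.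
Require Import Defs.
From mathcomp Require Import all_boot.
From mathcomp Require Import zify.
Set Implicit Arguments. Unset Strict Implicit. Unset Printing Implicit Defensive.

#[global] Hint Resolve Deq_refl : core.
Section Infra.
Variable n : nat.

Lemma Deq_ctx u v p q : Deq n u v -> Deq n (p ++ u ++ q) (p ++ v ++ q).
Proof.
elim=> {u v}.
- by move=> u; apply: Deq_refl.
- by move=> u v _ H; apply: Deq_sym.
- by move=> u v w _ H1 _ H2; apply: Deq_trans H1 H2.
- move=> a b u v ha hb.
  have := Deq_rel (p ++ u) (v ++ q) ha hb.
  by rewrite -!catA.
Qed.

Global Instance Deq_equiv : Equivalence (Deq n).
Proof. split. exact: Deq_refl. exact: Deq_sym. move=> x y z; exact: Deq_trans. Qed.

Global Instance cat_proper : Proper (Deq n ==> Deq n ==> Deq n) (@cat nat).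
Proof.
move=> u u' Hu v v' Hv.
transitivity (u' ++ v).
  by have := Deq_ctx [::] v Hu.
by have := Deq_ctx u' [::] Hv; rewrite !cats0.
Qed.

Global Instance cons_proper : Proper (eq ==> Deq n ==> Deq n) (@cons nat).
Proof. move=> a b -> u v H. by have := Deq_ctx [:: b] [::] H; rewrite !cats0. Qed.

Lemma Deq_relw a b : a < n -> b < n -> Deq n (wpow [:: a; b] (coxm a b)) [::].
Proof. by move=> ha hb; have := Deq_rel [::] [::] ha hb; rewrite cats0. Qed.

Lemma cancel2 a l : a < n -> Deq n (a :: a :: l) l.
Proof.
move=> ha; have := Deq_relw ha ha; rewrite /coxm eqxx /wpow /= => H.
by have := Deq_ctx [::] l H.
Qed.

Lemma revK_deq y : all (fun b => b < n) y -> Deq n (rev y ++ y) [::].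
Proof.
elim: y => [|c y IH] /=; first by move=> _; apply: Deq_refl.
move=> /andP [hc hy].
rewrite rev_cons -cats1 -catA /=. rewrite cancel2 //. exact: IH.
Qed.

Lemma revK_deq' y : all (fun b => b < n) y -> Deq n (y ++ rev y) [::].
Proof. move=> hy; have := @revK_deq (rev y); rewrite revK all_rev; exact. Qed.

Lemma inv_eq x y : all (fun b => b < n) y -> Deq n (x ++ rev y) [::] -> Deq n x y.
Proof.
move=> hy H.
transitivity (x ++ (rev y ++ y)). by rewrite revK_deq // cats0.
by rewrite catA H.
Qed.

Lemma comm2 a b l : a < n -> b < n -> coxm a b = 2 -> Deq n (a :: b :: l) (b :: a :: l).
Proof.
move=> ha hb hc.
have : Deq n [:: a; b] [:: b; a].
  apply: inv_eq; first by rewrite /= ha hb.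
  by have := Deq_relw ha hb; rewrite hc.
move=> H; by have := Deq_ctx [::] l H.
Qed.

Lemma braid3 a b l : a < n -> b < n -> coxm a b = 3 -> Deq n (a :: b :: a :: l) (b :: a :: b :: l).
Proof.
move=> ha hb hc.
have : Deq n [:: a; b; a] [:: b; a; b].
  apply: inv_eq; first by rewrite /= ha hb.
  by have := Deq_relw ha hb; rewrite hc.
move=> H; by have := Deq_ctx [::] l H.
Qed.

Lemma coxm_sym a b : coxm a b = coxm b a.
Proof.
rewrite /coxm eq_sym; case: a => [|a]; case: b => [|b] //=.
by rewrite orbC.
Qed.

Lemma past u a l : a < n -> all (fun b => (b < n) && (coxm a b == 2)) u ->
  Deq n (u ++ a :: l) (a :: u ++ l).
Proof.
move=> ha; elim: u => [|b u IH] /=; first by move=> _; apply: Deq_refl.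
move=> /andP [/andP [hb /eqP hc] hu].
rewrite IH // comm2 // coxm_sym //.
Qed.

Lemma Deq_mono m u v : Deq m u v -> m <= n -> Deq n u v.
Proof.
move=> H hm; elim: H => {u v}.
- move=> u; exact: Deq_refl.
- move=> u v _ H; exact: Deq_sym H.
- move=> u v w _ H1 _ H2; exact: Deq_trans H1 H2.
- move=> a b u v ha hb; apply: Deq_rel; lia.
Qed.

End Infra.

Lemma coxm_far a b : 0 < a -> 0 < b -> (a.+1 < b) || (b.+1 < a) -> coxm a b = 2.
Proof.
move=> ha hb h; rewrite /coxm.
have -> : (a == b) = false by apply/eqP; lia.
have -> : (a == 0) = false by apply/eqP; lia.
have -> : (b == 0) = false by apply/eqP; lia.
have -> : (a == b.+1) || (b == a.+1) = false by apply/negP => /orP [] /eqP; lia.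
by [].
Qed.

Lemma coxm_0far b : b != 0 -> b != 2 -> coxm 0 b = 2.
Proof. by rewrite /coxm; case: b => // b; case: b => // [[|b]]. Qed.

Lemma coxm_adj a : 0 < a -> coxm a a.+1 = 3.
Proof.
move=> ha; rewrite /coxm.
have -> : (a == a.+1) = false by apply/eqP; lia.
have -> : (a == 0) = false by apply/eqP; lia.
by rewrite eqxx orbT.
Qed.

Lemma coxm_02 : coxm 0 2 = 3. Proof. by []. Qed.


Definition step (a : nat) (x : nat * bool) : nat * bool :=
  if a == 0 then (if x.1 == 1 then (2, ~~ x.2) else if x.1 == 2 then (1, ~~ x.2) else x)
  else if x.1 == a then (a.+1, x.2) else if x.1 == a.+1 then (a, x.2) else x.

Definition walk (u : seq nat) (x : nat * bool) : nat * bool := foldl (fun y a => step a y) x u.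

Arguments walk : simpl never.

Lemma walk_cat u v x : walk (u ++ v) x = walk v (walk u x).
Proof. by rewrite /walk foldl_cat. Qed.

Lemma step_invol a x : step a (step a x) = x.
Proof.
case: x => p s; rewrite /step /=.
case: (eqVneq a 0) => [_|a0] /=.
  case: (eqVneq p 1) => [->|p1] /=; first by rewrite negbK.
  case: (eqVneq p 2) => [->|p2] /=; first by rewrite negbK.
  by rewrite (negbTE p1) (negbTE p2).
case: (eqVneq p a) => [->|pa] /=; first by rewrite eqn_leq ltnn /= eqxx.
case: (eqVneq p a.+1) => [->|pa1] /=; first by rewrite eqxx.
by rewrite (negbTE pa) (negbTE pa1).
Qed.

Ltac no_if t := lazymatch t with context [if _ then _ else _] => fail | _ => idtac end.
Ltac bf := repeat (match goal with
 | |- context [ ?x == ?y ] => no_if x; no_if y; case: (eqVneq x y) => ?; try subst; simpl; try lia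
 end); rewrite ?negbK //.

Ltac cox_split a b :=
  case: (eqVneq a b) => [<-|]; [rewrite /coxm eqxx|rewrite /coxm; case: eqP => //= /eqP];
  [|case: (eqVneq a 0) => [->|?]; [case: (eqVneq b 2) => [->|?] /= |
  case: (eqVneq b 0) => [->|?]; [case: (eqVneq a 2) => [->|?] /= |
  case: (eqVneq a b.+1) => [->|?]; [ | case: (eqVneq b a.+1) => [->|?] ]]]; rewrite /= ?eqxx ?orbT //=; move=> *].

Lemma step_comm a b x : coxm a b = 2 -> step a (step b x) = step b (step a x).
Proof.
case: x => p s.
cox_split a b; rewrite /step /=; bf.
Qed.

Lemma step_braid a b x : coxm a b = 3 -> step a (step b (step a x)) = step b (step a (step b x)).
Proof.
case: x => p s.
cox_split a b; rewrite /step /=; bf.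
Qed.

Lemma coxm_vals a b : [\/ coxm a b = 1 /\ a = b, coxm a b = 2 | coxm a b = 3].
Proof.
rewrite /coxm; case: eqP => [->|_]; first by constructor 1.
by repeat case: ifP => _; auto using Or32, Or33.
Qed.

Lemma walk_rel a b x : walk (wpow [:: a; b] (coxm a b)) x = x.
Proof.
case: (coxm_vals a b) => [[-> ->]|h|h]; rewrite ?h /wpow /walk /=.
- by rewrite !step_invol.
- by rewrite (@step_comm a b (step a x) h) !step_invol.
- by rewrite (@step_braid a b x h) !step_invol.
Qed.

Lemma walk_Deq n u v : Deq n u v -> forall x, walk u x = walk v x.
Proof.
elim.
- by [].
- by move=> u0 v0 _ H x; rewrite H.
- by move=> u0 v0 w0 _ H1 _ H2 x; rewrite H1 H2.
- by move=> a b u0 v0 _ _ x; rewrite !walk_cat walk_rel.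
Qed.


Ltac res_if := repeat match goal with |- context [ if ?x == ?y then _ else _ ] => no_if x; no_if y;
  first [ (have -> : (x == y) = true by apply/eqP; lia) | (have -> : (x == y) = false by apply/eqP; lia) ] end.

Definition touches a p := if a == 0 then p <= 2 else (p == a) || (p == a.+1).

Lemma step_fix a p s : ~~ touches a p -> step a (p, s) = (p, s).
Proof.
rewrite /touches /step /=; case: eqP => _.
  by case: eqP => [->|_] //; case: eqP => [->|_].
by case/norP => /negbTE -> /negbTE ->.
Qed.

Lemma walk_fix u p s : all (fun a => ~~ touches a p) u -> walk u (p, s) = (p, s).
Proof.
elim: u => [|a u IH] //= /andP [h1 h2].
by rewrite /walk /= step_fix //; apply: IH.
Qed.

Lemma walk_cons a u x : walk (a :: u) x = walk u (step a x).
Proof. by []. Qed.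

Lemma walk_up m q s : 0 < q -> walk (iota q m) (q, s) = (q + m, s).
Proof.
elim: m q => [|m IH] q hq /=; first by rewrite addn0.
rewrite walk_cons /step /=.
have -> : (q == 0) = false by apply/eqP; lia.
rewrite eqxx IH //; congr pair; lia.
Qed.

Lemma walk_down m q s : 0 < q -> walk (rev (iota q m)) (q + m, s) = (q, s).
Proof.
elim: m => [|m IH] hq; first by rewrite addn0.
rewrite (_ : iota q m.+1 = iota q m ++ [:: q + m]); last by rewrite -addn1 iotaD.
rewrite rev_cat /= walk_cons /step /=; res_if.
exact: IH.
Qed.

Lemma walk_wword k s : 0 < k -> walk (wword k) (k.+1, s) = (k.+1, ~~ s).
Proof.
move=> hk; rewrite /wword walk_cat.
have -> : k.+1 = 1 + k by lia.
rewrite walk_down // walk_cons /step /= walk_up //; congr pair; lia.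
Qed.

Lemma wpow0 u : wpow u 0 = [::]. Proof. by []. Qed.
Lemma wpowS u e : wpow u e.+1 = u ++ wpow u e. Proof. by []. Qed.
Lemma wpow1 u : wpow u 1 = u. Proof. by rewrite wpowS cats0. Qed.

Lemma walk_tword m q s : 2 <= q <= m -> walk (tword m) (q, s) = (q.-1, s).
Proof.
move=> hq; rewrite /tword.
have -> : m.-1 = (q - 2) + (1 + (m - q)) by lia.
rewrite iotaD iotaD walk_cat walk_fix; last first.
  apply/allP => a; rewrite mem_iota /touches => ha.
  have -> : (a == 0) = false by apply/eqP; lia.
  apply/norP; split; apply/eqP; lia.
rewrite /= walk_cons /step /=; res_if.
rewrite walk_fix; first by congr pair; lia.
apply/allP => a; rewrite mem_iota /touches => ha.
have -> : (a == 0) = false by apply/eqP; lia.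
apply/norP; split; apply/eqP; lia.
Qed.

Lemma walk_tpow m i q s : q <= m -> i < q -> walk (wpow (tword m) i) (q, s) = (q - i, s).
Proof.
elim: i q => [|i IH] q hq hi; first by rewrite subn0.
rewrite wpowS walk_cat walk_tword; last by lia.
rewrite IH; [congr pair|..]; lia.
Qed.

Lemma walk_wpow_w k j s : 0 < k -> j <= 1 -> walk (wpow (wword k) j) (k.+1, s) = (k.+1, s (+) (j == 1)).
Proof.
move=> hk; case: j => [|[|]] // _; first by rewrite addbF.
by rewrite wpow1 walk_wword // addbT.
Qed.

Lemma walk_rev v x : walk (rev v) (walk v x) = x.
Proof.
elim: v x => [|a v IH] x //=.
by rewrite rev_cons -cats1 walk_cat walk_cons IH /= /walk /= step_invol.
Qed.

Lemma all_flatten_ P (ss : seq (seq nat)) : all (all P) ss -> all P (flatten ss).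
Proof. by elim: ss => //= s ss IH /andP [h1 h2]; rewrite all_cat h1 IH. Qed.

Lemma all_wpow P u e : all P u -> all P (wpow u e).
Proof. move=> h; elim: e => //= e IH; by rewrite wpowS all_cat h IH. Qed.

Lemma nf_split m i j : normal_form m.+2 i j =
  normal_form m.+1 i j ++ (wpow (wword m.+1) (j m.+1) ++ wpow (tword m.+2) (i m.+2)).
Proof.
rewrite /normal_form (_ : iota 1 m.+2.-1 = iota 1 m ++ [:: m.+1]); last by rewrite (_ : m.+2.-1 = m + 1) ?iotaD // addn1.
by rewrite map_cat flatten_cat /= cats0.
Qed.

Lemma nf_letters m i j : all (fun a => a < m) (normal_form m i j).
Proof.
apply: all_flatten_; rewrite all_map; apply/allP => k; rewrite mem_iota => hk /=.
have hm : k < m by move: hk; case: m => [|m] //=; lia.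
rewrite all_cat; apply/andP; split; apply: all_wpow.
- rewrite /wword all_cat all_rev /=; apply/andP; split; [|apply/andP; split];
  try (apply/allP => a; rewrite mem_iota => ha); lia.
- rewrite /tword; apply/allP => a; rewrite mem_iota => ha; lia.
Qed.

Lemma nf_fix m i j s : walk (normal_form m.+1 i j) (m.+2, s) = (m.+2, s).
Proof.
case: m => [|m]; first by [].
apply: walk_fix; apply/allP => a ha.
have := allP (nf_letters m.+2 i j) a ha => hlt.
rewrite /touches; case: eqP => _; first by [].
apply/norP; split; apply/eqP; lia.
Qed.

Lemma uniq_step m i j i' j' : nf_bounds m.+2 i j -> nf_bounds m.+2 i' j' ->
  (forall x, walk (normal_form m.+2 i j) x = walk (normal_form m.+2 i' j') x) ->
  [/\ i m.+2 = i' m.+2, j m.+1 = j' m.+1 &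
     forall x, walk (normal_form m.+1 i j) x = walk (normal_form m.+1 i' j') x].
Proof.
move=> [bi bj] [bi' bj'] H.
have HH := H (m.+2, false).
have b1 := bi m.+2 ltac:(lia). have b2 := bi' m.+2 ltac:(lia).
have b3 := bj m.+1 ltac:(lia). have b4 := bj' m.+1 ltac:(lia).
rewrite !nf_split !walk_cat !nf_fix !walk_wpow_w // !walk_tpow // in HH; try lia.
case: HH => hi hj.
have ei : i m.+2 = i' m.+2 by lia.
have ej : j m.+1 = j' m.+1.
  move: hj b3 b4; case: (j m.+1) => [|[|]]; case: (j' m.+1) => [|[|]] //.
split=> // x; have := H x; rewrite !nf_split ei ej.
set v := (wpow (wword m.+1) (j' m.+1) ++ wpow (tword m.+2) (i' m.+2)).
rewrite (walk_cat (normal_form _ i j)) (walk_cat (normal_form _ i' j')) => E.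
by rewrite -(walk_rev v (walk (normal_form m.+1 i j) x)) E walk_rev.
Qed.

Lemma uniq_nf m i j i' j' : nf_bounds m.+2 i j -> nf_bounds m.+2 i' j' ->
  (forall x, walk (normal_form m.+2 i j) x = walk (normal_form m.+2 i' j') x) ->
  (forall k, 2 <= k <= m.+2 -> i k = i' k) /\ (forall k, 1 <= k <= m.+2 - 1 -> j k = j' k).
Proof.
elim: m => [|m IH] hb hb' H; have [ei ej H2] := uniq_step hb hb' H.
  split=> k hk; [have -> : k = 2 by lia | have -> : k = 1 by lia]; by [].
case: hb hb' => [bi bj] [bi' bj'].
have hb1 : nf_bounds m.+2 i j.
  by split=> k hk; [apply: bi|apply: bj]; lia.
have hb2 : nf_bounds m.+2 i' j'.
  by split=> k hk; [apply: bi'|apply: bj']; lia.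
have [IH1 IH2] := IH hb1 hb2 H2.
split=> k hk.
  case: (eqVneq k m.+3) => [->|nk] //; apply: IH1; lia.
case: (eqVneq k m.+2) => [->|nk] //; apply: IH2; lia.
Qed.


Definition down k p := rev (iota p (k.+1 - p)).

Lemma down_split k p : p <= k -> down k p = down k p.+1 ++ [:: p].
Proof.
move=> h; rewrite /down (_ : k.+1 - p = (k.+1 - p.+1).+1); last lia.
by rewrite /= rev_cons cats1.
Qed.

Lemma down_top k : down k k.+1 = [::].
Proof. by rewrite /down subnn. Qed.

Lemma all_down k p (P : pred nat) : (forall b, p <= b <= k -> P b) -> all P (down k p).
Proof. move=> h; rewrite /down all_rev; apply/allP => b; rewrite mem_iota => hb; apply: h; lia. Qed.

Lemma all_iota s m (P : pred nat) : (forall b, s <= b < s + m -> P b) -> all P (iota s m).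
Proof. move=> h; apply/allP => b; rewrite mem_iota => hb; apply: h; lia. Qed.

Lemma wpowSr y c : wpow y c.+1 = wpow y c ++ y.
Proof.
elim: c => [|c IH]; first by rewrite wpow1.
have H : y ++ wpow y c = wpow y c ++ y by rewrite -wpowS IH.
by rewrite wpowS IH catA H.
Qed.

Lemma rev_wpow a b c : rev (wpow [:: a; b] c) = wpow [:: b; a] c.
Proof. elim: c => [|c IH] //. by rewrite wpowS rev_cat IH wpowSr. Qed.

Lemma Deq_rev n u v : Deq n u v -> Deq n (rev u) (rev v).
Proof.
elim.
- by [].
- by move=> u0 v0 _ H; symmetry.
- by move=> u0 v0 w0 _ H1 _ H2; transitivity (rev v0).
- move=> a b u0 v0 ha hb.
  rewrite !rev_cat rev_wpow coxm_sym -catA; exact: Deq_rel.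
Qed.

Lemma up_braid n s m a : 0 < s -> s <= a -> a.+2 <= s + m -> s + m <= n ->
  Deq n (iota s m ++ [:: a]) (a.+1 :: iota s m).
Proof.
move=> h1 h2 h3 h4.
have E : iota s m = iota s (a - s) ++ a :: a.+1 :: iota a.+2 (m - (a - s) - 2).
  rewrite {1}(_ : m = (a - s) + (2 + (m - (a - s) - 2))); last lia.
  rewrite iotaD iotaD (_ : s + (a - s) = a); last lia.
  by rewrite /= addn2.
rewrite E -catA /=.
rewrite (@past n (iota a.+2 _) a [::]); first last.
  apply: all_iota => b hb; apply/andP; split; [lia|apply/eqP; apply: coxm_far; lia].
  lia.
rewrite cats0 (@braid3 n a a.+1); first last.
  by rewrite coxm_adj //; lia.
  lia. lia.
rewrite (@past n (iota s (a - s)) a.+1); first by [].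
  lia.
apply: all_iota => b hb; apply/andP; split; [lia|apply/eqP; apply: coxm_far; lia].
Qed.

Lemma down_braid n k p a : 0 < p -> p < a -> a <= k -> k < n ->
  Deq n (down k p ++ [:: a]) (a.-1 :: down k p).
Proof.
move=> h1 h2 h3 h4.
have := Deq_rev (@up_braid n p (k.+1 - p) a.-1 h1 ltac:(lia) ltac:(lia) ltac:(lia)).
rewrite rev_cat /= rev_cons -cats1 (_ : a.-1.+1 = a); last lia.
by move=> H; symmetry; exact: H.
Qed.

Arguments down : simpl never.

Definition R k (x : nat * bool) : seq nat :=
  if ~~ x.2 then down k x.1 else if x.1 == 1 then down k 2 ++ [:: 0] else down k 1 ++ 0 :: iota 2 (x.1 - 2).

Definition clos k x s := exists h, all (fun b => b < k) h /\ Deq k.+1 (R k x ++ [:: s]) (h ++ R k (step s x)).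

Ltac res_if2 := simpl; repeat (match goal with
  | |- context [ if ?x == ?y then _ else _ ] => no_if x; no_if y;
     first [ (case: (eqVneq x y) => ?; [ exfalso; lia | idtac ])
           | (case: (eqVneq x y) => ?; [ idtac | exfalso; lia ]) ]
  end; simpl).

Ltac far_all := apply: all_down || apply: all_iota; move=> b hb; apply/andP; split;
  [lia | apply/eqP; first [apply: coxm_far; lia | apply: coxm_0far; apply/eqP; lia]].

Lemma clos_pos k p s : 1 < k -> 0 < p <= k.+1 -> s <= k -> clos k (p, false) s.
Proof.
move=> hk hp hs; rewrite /clos /R /step /=.
case: (eqVneq s 0) => [->|s0] /=.
- case: (ltngtP p 2) => hp2.
  + have -> : p = 1 by lia. by exists [::].
  + exists [:: 0]; split; first by rewrite /=; lia.
    res_if2. rewrite (@past k.+1 (down k p) 0 [::]) ?cats0 //. far_all.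
  + by rewrite hp2; exists [::].
- case: (ltngtP s p) => hsp.
  + case: (eqVneq s.+1 p) => [<-|nsp].
    * res_if2. exists [::]; split => //=. by rewrite (@down_split k s) //; lia.
    * res_if2. exists [:: s]; split; first by rewrite /=; lia.
      rewrite (@past k.+1 (down k p) s [::]) ?cats0 //; try lia; far_all.
  + res_if2. exists [:: s.-1]; split; first by rewrite /=; lia.
    rewrite /=; apply: down_braid; lia.
  + subst s; res_if2. exists [::]; split => //=.
    rewrite (@down_split k p) // -catA /= cancel2 ?cats0 //; lia.
Qed.

Lemma down_braid_l n k p a l : 0 < p -> p < a -> a <= k -> k < n ->
  Deq n (down k p ++ a :: l) (a.-1 :: down k p ++ l).
Proof.
move=> h1 h2 h3 h4.
have := cat_proper (down_braid h1 h2 h3 h4) (Deq_refl n l).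
by rewrite -catA.
Qed.

Lemma down13 k : 1 < k -> down k 1 = down k 3 ++ [:: 2; 1].
Proof. move=> hk; rewrite (@down_split k 1); last lia. rewrite (@down_split k 2); last lia. by rewrite -catA. Qed.

Lemma clos_neg1 k s : 1 < k -> s <= k -> clos k (1, true) s.
Proof.
move=> hk hs; have hk0 : 0 < k by lia.
rewrite /clos /R /step /=.
case: (eqVneq s 0) => [->|s0] /=.
  exists [::]; split => //=. by rewrite -catA /= cancel2 ?cats0.
case: (eqVneq s 1) => [->|s1] /=.
  exists [::]; split => //=. rewrite -catA /= (@comm2 k.+1 0 1) //.
  by rewrite (@down_split k 1) // -catA.
case: (eqVneq s 2) => [->|s2] /=.
  exists [:: 0]; split; first by rewrite /=; lia.
  rewrite -catA /= (@down_split k 2) // -!catA /=.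
  rewrite (@braid3 k.+1 2 0) //; try lia.
  rewrite (@past k.+1 (down k 3) 0) //. far_all.
res_if2. exists [:: s.-1]; split; first by rewrite /=; lia.
rewrite -catA /= (@comm2 k.+1 0 s) //; try lia; last by apply: coxm_0far; apply/eqP; lia.
rewrite down_braid_l //; lia.
Qed.

Lemma clos_neg2 k s : 1 < k -> s <= k -> clos k (2, true) s.
Proof.
move=> hk hs; have hk0 : 0 < k by lia.
rewrite /clos /R /step /=.
case: (eqVneq s 0) => [->|s0] /=.
  exists [::]; split => //=. by rewrite -catA /= cancel2 ?cats0.
case: (eqVneq s 1) => [->|s1] /=.
  exists [::]; split => //=. rewrite -catA /= (@down_split k 1) // -catA /=.
  by rewrite (@comm2 k.+1 1 0) // cancel2.
case: (eqVneq s 2) => [->|s2] /=.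
  by exists [::]; split => //=; rewrite -catA.
res_if2. exists [:: s.-1]; split; first by rewrite /=; lia.
rewrite -catA /= (@comm2 k.+1 0 s) //; try lia; last by apply: coxm_0far; apply/eqP; lia.
rewrite down_braid_l //; lia.
Qed.

Lemma clos_negp k p s : 1 < k -> 2 < p <= k.+1 -> s <= k -> clos k (p, true) s.
Proof.
move=> hk hp hs; have hk0 : 0 < k by lia.
rewrite /clos /R /step /=.
have E : iota 2 (p - 2) = 2 :: iota 3 (p - 3) by rewrite (_ : p - 2 = (p - 3).+1) //; lia.
case: (eqVneq s 0) => [->|s0] /=.
  res_if2. exists [:: 1]; split; first by rewrite /=; lia.
  rewrite E -catA /=.
  rewrite (@past k.+1 (iota 3 (p - 3)) 0 [::]) ?cats0 //; last far_all.
  rewrite (@braid3 k.+1 0 2) //; try lia.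
  rewrite down13 // -!catA /=.
  rewrite (@braid3 k.+1 2 1) //; try lia.
  rewrite (@past k.+1 (down k 3) 1) //; last far_all.
case: (eqVneq s 1) => [->|s1] /=.
  res_if2. exists [:: 0]; split; first by rewrite /=; lia.
  rewrite E -catA /=.
  rewrite (@past k.+1 (iota 3 (p - 3)) 1 [::]) ?cats0 //; last far_all.
  rewrite down13 // -!catA /=.
  rewrite {1}(@comm2 k.+1 1 0) //.
  rewrite (@braid3 k.+1 1 2) //; try lia.
  rewrite (@braid3 k.+1 2 0) //; try lia.
  rewrite (@past k.+1 (down k 3) 0) //; last far_all.
  rewrite (@comm2 k.+1 0 1) //.
case: (ltngtP s.+1 p) => hsp.
- case: (ltnP s 2) => hs2; first lia.
  res_if2. exists [:: s]; split; first by rewrite /=; lia.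
  rewrite -catA /= (@up_braid k.+1 2 (p - 2) s) //; try lia.
  rewrite (@comm2 k.+1 0 s.+1) //; try lia; last by apply: coxm_0far; apply/eqP; lia.
  rewrite down_braid_l //; lia.
- case: (eqVneq s p) => [esp|nsp].
  + subst s; res_if2. exists [::]; split => //=.
    rewrite (_ : p.+1 - 2 = (p - 2) + 1); last lia.
    by rewrite iotaD -!catA /= (_ : 2 + (p - 2) = p) //; lia.
  + res_if2. exists [:: s.-1]; split; first by rewrite /=; lia.
    rewrite -catA /= (@past k.+1 (iota 2 (p - 2)) s [::]) ?cats0 //; try lia; last far_all.
    rewrite (@comm2 k.+1 0 s) //; try lia; last by apply: coxm_0far; apply/eqP; lia.
    rewrite down_braid_l //; lia.
- res_if2. exists [::]; split => //=.
  rewrite (_ : p - 2 = (s - 2) + 1); last lia.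
  rewrite iotaD -!catA /= (_ : 2 + (s - 2) = s); last lia.
  rewrite -catA /= cancel2 ?cats0 //; try lia.
Qed.


Lemma closure k x s : 1 < k -> 0 < x.1 <= k.+1 -> s <= k -> clos k x s.
Proof.
case: x => p [] hk /= hp hs; last exact: clos_pos.
case: (eqVneq p 1) => [->|p1]; first exact: clos_neg1.
case: (eqVneq p 2) => [->|p2]; first exact: clos_neg2.
apply: clos_negp => //; lia.
Qed.

Lemma step_range k a x : 0 < k -> a <= k -> 0 < x.1 <= k.+1 -> 0 < (step a x).1 <= k.+1.
Proof.
case: x => p s hk ha /= hp; rewrite /step /=.
bf.
Qed.

Lemma walk_range k u x : 0 < k -> all (fun a => a <= k) u -> 0 < x.1 <= k.+1 -> 0 < (walk u x).1 <= k.+1.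
Proof.
move=> hk; elim: u x => [|a u IH] x //= /andP [ha hu] hx.
rewrite walk_cons; apply: IH => //; exact: step_range hk ha hx.
Qed.

Lemma closure_word k u : 1 < k -> all (fun a => a <= k) u -> forall x, 0 < x.1 <= k.+1 ->
  exists h, all (fun b => b < k) h /\ Deq k.+1 (R k x ++ u) (h ++ R k (walk u x)).
Proof.
move=> hk; elim: u => [|s u IH] /=.
  by move=> _ x _; exists [::]; rewrite cats0.
move=> /andP [hs hu] x hx.
have [h1 [hh1 H1]] := closure hk hx hs.
have [h2 [hh2 H2]] := IH hu (step s x) (step_range (ltnW hk) hs hx).
exists (h1 ++ h2); split; first by rewrite all_cat hh1 hh2.
rewrite walk_cons -cat1s catA H1 -catA H2 catA //.
Qed.

Lemma nf_ext m i j i' j' : (forall q, 2 <= q <= m -> i q = i' q) -> (forall q, 1 <= q < m -> j q = j' q) ->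
  normal_form m i j = normal_form m i' j'.
Proof.
move=> hi hj; rewrite /normal_form; congr flatten; apply/eq_in_map => q; rewrite mem_iota => hq.
rewrite hi ?hj //; lia.
Qed.

Lemma nf_split' k i j : 0 < k -> normal_form k.+1 i j =
  normal_form k i j ++ (wpow (wword k) (j k) ++ wpow (tword k.+1) (i k.+1)).
Proof. by case: k => // m _; exact: nf_split. Qed.

Lemma exist_step k w : 1 < k -> all (fun a => a < k.+1) w ->
  (forall w', all (fun a => a < k) w' -> exists i j, nf_bounds k i j /\ Deq k w' (normal_form k i j)) ->
  exists i j, nf_bounds k.+1 i j /\ Deq k.+1 w (normal_form k.+1 i j).
Proof.
move=> hk hw IH.
have hx0 : 0 < (k.+1, false).1 <= k.+1 by rewrite /=; lia.
have hw' : all (fun a => a <= k) w by [].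
have [h [hh H]] := closure_word hk hw' hx0.
have R0 : R k (k.+1, false) = [::] by rewrite /R /= down_top.
rewrite R0 /= in H.
have := walk_range (ltnW hk) hw' hx0.
case E : (walk w (k.+1, false)) => [p sg] /= hp.
rewrite E in H.
set V := wpow (wword k) (nat_of_bool sg) ++ wpow (tword k.+1) (k.+1 - p).
have hV : all (fun a => a <= k) V.
  rewrite all_cat; apply/andP; split; apply: all_wpow.
  - rewrite /wword all_cat all_rev; apply/andP; split; first by apply: all_iota => b hb; lia.
    by rewrite /=; apply: all_iota => b hb; lia.
  - by rewrite /tword; apply: all_iota => b hb; lia.
have EV : walk V (k.+1, false) = (p, sg).
  rewrite /V walk_cat walk_wpow_w; try lia.
  rewrite walk_tpow; try lia.
  congr pair; [lia | by case: (sg)].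
have [h' [hh' H']] := closure_word hk hV hx0.
rewrite R0 /= EV in H'.
have HR : Deq k.+1 (R k (p, sg)) (rev h' ++ V).
  rewrite H' catA revK_deq //; apply/allP => b /(allP hh') /=; lia.
have hhh : all (fun b => b < k) (h ++ rev h') by rewrite all_cat all_rev hh hh'.
have [i0 [j0 [[bi bj] H0]]] := IH _ hhh.
exists (fun m => if m == k.+1 then k.+1 - p else i0 m), (fun m => if m == k then nat_of_bool sg else j0 m).
split.
  split=> q hq; case: eqP => ?; [lia| apply: bi; lia| by case: (sg) | apply: bj; lia].
rewrite H HR catA (Deq_mono H0 (leqnSn k)).
rewrite nf_split' ?eqxx; last lia.
rewrite (@nf_ext k _ _ i0 j0) //.
  move=> q hq; case: eqP => //; lia.
move=> q hq; case: eqP => //; lia.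
Qed.


Lemma d2_0 : Deq 2 [:: 0] [:: 1; 0; 1].
Proof. symmetry; rewrite (@comm2 2 1 0) //; rewrite (@cancel2 2 1) //. Qed.

Lemma base2 w : all (fun a => a < 2) w ->
  exists a b : bool, Deq 2 w (wpow [:: 1; 0] a ++ wpow [:: 1] b).
Proof.
elim: w => [|s w IH] /=; first by move=> _; exists false, false.
move=> /andP [hs hw]; have [a [b H]] := IH hw.
suff [a' [b' H']] : exists a' b' : bool, Deq 2 (s :: (wpow [:: 1; 0] a ++ wpow [:: 1] b)) (wpow [:: 1; 0] a' ++ wpow [:: 1] b').
  by exists a', b'; rewrite H.
clear H IH hw; case: s hs => [|[|//]] _; case: a; case: b; rewrite /wpow /=.
- exists false, false => /=. rewrite (@comm2 2 0 1) // (@cancel2 2 0) // (@cancel2 2 1) //.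
- exists false, true => /=. rewrite (@comm2 2 0 1) // (@cancel2 2 0) //.
- exists true, false => /=. rewrite (@comm2 2 0 1) //.
- exists true, true => /=. exact: d2_0.
- exists true, false => /=. rewrite (@cancel2 2 1) // (@comm2 2 0 1) //.
- exists true, true => /=. rewrite (@cancel2 2 1) //. exact: d2_0.
- exists false, false => /=. rewrite (@cancel2 2 1) //.
- by exists false, true.
Qed.

Lemma exist2 w : all (fun a => a < 2) w -> exists i j, nf_bounds 2 i j /\ Deq 2 w (normal_form 2 i j).
Proof.
move=> hw; have [a [b H]] := base2 hw.
exists (fun _ => nat_of_bool b), (fun _ => nat_of_bool a); split.
  by split=> q hq; [case: (b) => /=; lia | case: (a)].
by rewrite /normal_form /= cats0.
Qed.

Lemma existence m w : all (fun a => a < m.+2) w ->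
  exists i j, nf_bounds m.+2 i j /\ Deq m.+2 w (normal_form m.+2 i j).
Proof.
elim: m w => [|m IH] w hw; first exact: exist2.
apply: exist_step => //.
Qed.

Theorem mainTheorem1 (n : nat) (hn : 2 <= n) (w : seq nat)
    (hw : all (fun a => a < n) w) :
  (exists i j : nat -> nat, nf_bounds n i j /\ Deq n w (normal_form n i j)) /\
  (forall i j i' j' : nat -> nat,
      nf_bounds n i j -> nf_bounds n i' j' ->
      Deq n w (normal_form n i j) -> Deq n w (normal_form n i' j') ->
      (forall k, 2 <= k <= n -> i k = i' k) /\
      (forall k, 1 <= k <= n - 1 -> j k = j' k)).
Proof.
case: n hn hw => [|[|m]] // _ hw.
split; first exact: existence.
move=> i j i' j' hb hb' H1 H2.
apply: uniq_nf hb hb' _ => x.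
apply: walk_Deq.
exact: Deq_trans (Deq_sym H1) H2.
Qed.
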